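(* Let $X$ be a complete CAT(1) space with $\mathrm{Diam}(X)<\pi/2$. Then every vicinal mapping $T\colon X\to X$ has a fixed point.
   Context: A CAT(1) space is a $\pi$-geodesic metric space in which every geodesic triangle of perimeter $<2\pi$ satisfies the CAT(1) comparison inequality relative to comparison triangles in the unit sphere $\mathbb S^2$. With $C_z=\cos d(Tz,z)$, $T$ is vicinal if for all $x,y\in X$: $\bigl(C_x^2(1+C_y^2)+C_y^2(1+C_x^2)\bigr)\cos d(Tx,Ty)\ge C_x^2(1+C_y^2)\cos d(Tx,y)+C_y^2(1+C_x^2)\cos d(Ty,x)$. *)

(* Defs.v *)
From Stdlib Require Import Reals.
Open Scope R_scope.

Definition is_metric {X : Type} (d : X -> X -> R) : Prop :=
  (forall x y, 0 <= d x y) /\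
  (forall x y, d x y = 0 <-> x = y) /\
  (forall x y, d x y = d y x) /\
  (forall x y z, d x z <= d x y + d y z).

Definition complete {X : Type} (d : X -> X -> R) : Prop :=
  forall u : nat -> X,
    (forall eps, 0 < eps -> exists N : nat, forall m n, (N <= m)%nat -> (N <= n)%nat ->
        d (u m) (u n) < eps) ->
    exists l : X, forall eps, 0 < eps -> exists N : nat, forall n, (N <= n)%nat ->
        d (u n) l < eps.

Definition geodesic {X : Type} (d : X -> X -> R) (x y : X) (c : R -> X) : Prop :=
  c 0 = x /\ c (d x y) = y /\
  forall s t, 0 <= s <= d x y -> 0 <= t <= d x y -> d (c s) (c t) = Rabs (s - t).

Definition pi_geodesic {X : Type} (d : X -> X -> R) : Prop :=
  forall x y, d x y < PI -> exists c, geodesic d x y c.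

Definition R3 : Type := (R * R * R)%type.
Definition dot3 (u v : R3) : R :=
  let '(u1, u2, u3) := u in let '(v1, v2, v3) := v in u1 * v1 + u2 * v2 + u3 * v3.
Definition on_S2 (u : R3) : Prop := dot3 u u = 1.
Definition sdist (u v : R3) : R := acos (dot3 u v).

(** (p, pb) is a pair of corresponding points on the side c from a to b of a geodesic
    triangle and on the side [ab, bb] of a comparison triangle in S^2: p = c t and pb is
    the point of S^2 on the (minimal) comparison segment at distance t from ab. *)
Definition corr_on_side {X : Type} (d : X -> X -> R) (a b : X) (c : R -> X)
    (ab bb : R3) (p : X) (pb : R3) : Prop :=
  exists t, 0 <= t <= d a b /\ p = c t /\ on_S2 pb /\
            sdist ab pb = t /\ sdist pb bb = d a b - t.

Definition CAT1 {X : Type} (d : X -> X -> R) : Prop :=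
  is_metric d /\ pi_geodesic d /\
  forall (x y z : X) (cxy cyz czx : R -> X),
    geodesic d x y cxy -> geodesic d y z cyz -> geodesic d z x czx ->
    d x y + d y z + d z x < 2 * PI ->
    forall xb yb zb : R3, on_S2 xb -> on_S2 yb -> on_S2 zb ->
      sdist xb yb = d x y -> sdist yb zb = d y z -> sdist zb xb = d z x ->
      forall (p q : X) (pb qb : R3),
        (corr_on_side d x y cxy xb yb p pb \/ corr_on_side d y z cyz yb zb p pb \/
         corr_on_side d z x czx zb xb p pb) ->
        (corr_on_side d x y cxy xb yb q qb \/ corr_on_side d y z cyz yb zb q qb \/
         corr_on_side d z x czx zb xb q qb) ->
        d p q <= sdist pb qb.

Definition diam_lt {X : Type} (d : X -> X -> R) (r : R) : Prop :=
  exists D, D < r /\ forall x y, d x y <= D.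

Definition vicinal {X : Type} (d : X -> X -> R) (T : X -> X) : Prop :=
  forall x y : X,
    let Cx := cos (d (T x) x) in
    let Cy := cos (d (T y) y) in
    (Cx ^ 2 * (1 + Cy ^ 2) + Cy ^ 2 * (1 + Cx ^ 2)) * cos (d (T x) (T y))
    >= Cx ^ 2 * (1 + Cy ^ 2) * cos (d (T x) y) + Cy ^ 2 * (1 + Cx ^ 2) * cos (d (T y) x).

(* Main.v *)
Require Import Defs.
From Stdlib Require Import Reals Lra Psatz Classical IndefiniteDescription.
Open Scope R_scope.

Lemma cos_le_dec x y : 0 <= x -> x <= y -> y <= PI -> cos y <= cos x.
Proof.
  intros. destruct (Req_dec x y) as [->|Hne]; [lra|].
  left; apply cos_decreasing_1; lra.
Qed.

Lemma cos_lip a b : Rabs (cos a - cos b) <= Rabs (a - b).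
Proof.
  destruct (MVT_abs cos (fun x => - sin x) b a) as [c [Hc _]].
  { intros; apply derivable_pt_lim_cos. }
  rewrite Hc. rewrite Rabs_Ropp.
  pose proof (SIN_bound c). pose proof (Rabs_pos (a - b)).
  assert (Rabs (sin c) <= 1) by (apply Rabs_le; lra).
  nra.
Qed.

Lemma sphere_det a b dl :
  0 <= a -> 0 <= b -> 0 <= dl -> a + b <= PI ->
  dl <= a + b -> a <= b + dl -> b <= a + dl ->
  0 <= 1 - cos a ^ 2 - cos b ^ 2 - cos dl ^ 2 + 2 * cos a * cos b * cos dl.
Proof.
  intros.
  assert (Hc1 : cos (a + b) <= cos dl) by (apply cos_le_dec; lra).
  assert (Hc2 : cos dl <= cos (a - b)).
  { destruct (Rle_dec b a).
    - apply cos_le_dec; lra.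
    - replace (a - b) with (- (b - a)) by ring. rewrite cos_neg. apply cos_le_dec; lra. }
  rewrite cos_plus in Hc1. rewrite cos_minus in Hc2.
  pose proof (sin2_cos2 a) as Sa. pose proof (sin2_cos2 b) as Sb. unfold Rsqr in *.
  assert (E : 1 - cos a ^ 2 - cos b ^ 2 - cos dl ^ 2 + 2 * cos a * cos b * cos dl
     = (cos dl - (cos a * cos b - sin a * sin b)) * ((cos a * cos b + sin a * sin b) - cos dl)).
  { assert (Ha : sin a * sin a = 1 - cos a * cos a) by lra.
    assert (Hb : sin b * sin b = 1 - cos b * cos b) by lra.
    transitivity (-(cos dl - cos a * cos b)^2 + (sin a * sin a) * (sin b * sin b)).
    - rewrite Ha, Hb; ring.
    - ring. }
  rewrite E. apply Rmult_le_pos; lra.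
Qed.

Lemma midpoint (X : Type) (d : X -> X -> R) (D : R) :
  CAT1 d -> 0 <= D -> D < PI / 2 -> (forall x y, d x y <= D) ->
  forall y1 y2 : X, exists m : X, forall x : X,
    (cos (d x y1) + cos (d x y2)) / (2 * cos (d y1 y2 / 2)) <= cos (d x m).
Proof.
  intros [[Hnn [H0 [Hsym Htri]]] [Hpg Hcat]] HD0 HD Hd y1 y2.
  pose proof PI_RGT_0 as Hpi.
  set (dl := d y1 y2).
  destruct (Req_dec dl 0) as [Hz|Hnz].
  { assert (y1 = y2) by (apply H0; exact Hz). subst y2.
    exists y1. intros x. rewrite Hz. replace (0/2) with 0 by field. rewrite cos_0. lra. }
  assert (Hdl : 0 < dl) by (destruct (Hnn y1 y2) as [Hl|Hl]; [exact Hl| exfalso; apply Hnz; symmetry; exact Hl]).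
  assert (HdlD : dl <= D) by apply Hd.
  destruct (Hpg y1 y2) as [c12 Hc12]; [fold dl; lra|].
  exists (c12 (dl / 2)). intros x.
  set (c := cos (dl / 2)). set (s := sin (dl / 2)).
  assert (Hc : 0 < c) by (apply cos_gt_0; lra).
  assert (Hs : 0 < s) by (apply sin_gt_0; lra).
  assert (Hcs : s * s + c * c = 1) by (pose proof (sin2_cos2 (dl/2)); unfold Rsqr in *; unfold s, c; lra).
  assert (Hcd : cos dl = c * c - s * s).
  { unfold c, s. rewrite <- cos_2a. f_equal. field. }
  set (a := d x y1). set (b := d y2 x).
  assert (Ha : 0 <= a) by apply Hnn. assert (Hb : 0 <= b) by apply Hnn.
  assert (HaD : a <= D) by apply Hd. assert (HbD : b <= D) by apply Hd.
  set (XX := cos a). set (YY := cos b).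
  set (p := (XX + YY) / (2 * c)). set (q := (YY - XX) / (2 * s)).
  assert (Hp : 2 * c * p = XX + YY) by (unfold p; field; lra).
  assert (Hq : 2 * s * q = YY - XX) by (unfold q; field; lra).
  assert (Hdet := sphere_det a b dl Ha Hb (Rlt_le _ _ Hdl) ltac:(lra)).
  assert (Ht1 : dl <= a + b).
  { unfold dl, a, b. rewrite (Hsym y2 x). rewrite (Hsym x y1). apply Htri. }
  assert (Ht2 : a <= b + dl).
  { unfold dl, a, b. rewrite (Hsym y2 x). rewrite (Hsym y1 y2). apply Htri. }
  assert (Ht3 : b <= a + dl).
  { unfold dl, a, b. rewrite (Hsym y2 x). apply Htri. }
  specialize (Hdet Ht1 Ht2 Ht3). fold XX YY in Hdet. rewrite Hcd in Hdet.
  assert (HK : 4 * c * c * s * s * (1 - p * p - q * q)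
     = 1 - XX ^ 2 - YY ^ 2 - (c * c - s * s) ^ 2 + 2 * XX * YY * (c * c - s * s)).
  { transitivity (4 * c * c * s * s - s * s * (2 * c * p) ^ 2 - c * c * (2 * s * q) ^ 2).
    - ring.
    - rewrite Hp, Hq.
      assert (E : s * s + c * c - 1 = 0) by lra.
      transitivity (1 - XX ^ 2 - YY ^ 2 - (c * c - s * s) ^ 2 + 2 * XX * YY * (c * c - s * s)
        + (s * s + c * c - 1) * (c * c + s * s + 1 - XX ^ 2 - YY ^ 2)).
      + ring.
      + rewrite E. ring. }
  assert (Hpos : 0 <= 1 - p * p - q * q).
  { assert (0 < 4 * c * c * s * s) by (repeat apply Rmult_lt_0_compat; lra).
    nra. }
  set (r := sqrt (1 - p * p - q * q)).
  assert (Hr : r * r = 1 - p * p - q * q) by (apply sqrt_sqrt; exact Hpos).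
  assert (Hdot : forall a1 a2 a3 b1 b2 b3 : R,
    dot3 (a1, a2, a3) (b1, b2, b3) = a1 * b1 + a2 * b2 + a3 * b3) by reflexivity.
  assert (pc : p * c = (XX + YY) / 2) by (unfold p; field; lra).
  assert (qs : q * s = (YY - XX) / 2) by (unfold q; field; lra).
  assert (Hp1 : -1 <= p <= 1) by nra.
  destruct (Hpg x y1) as [cxy Gxy]; [fold a; lra|].
  destruct (Hpg y2 x) as [czx Gzx]; [fold b; lra|].
  assert (Hacc : forall u, 0 <= u <= PI -> acos (cos u) = u) by (intros; apply acos_cos; lra).
  assert (Hmain := Hcat x y1 y2 cxy c12 czx Gxy Hc12 Gzx ltac:(fold a b dl; lra)
     (p, q, r) (c, -s, 0) (c, s, 0)).
  assert (HS1 : on_S2 (p, q, r)) by (unfold on_S2; rewrite Hdot; lra).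
  assert (HS2 : on_S2 (c, -s, 0)) by (unfold on_S2; rewrite Hdot; lra).
  assert (HS3 : on_S2 (c, s, 0)) by (unfold on_S2; rewrite Hdot; lra).
  assert (HS4 : on_S2 (1, 0, 0)) by (unfold on_S2; rewrite Hdot; lra).
  specialize (Hmain HS1 HS2 HS3).
  assert (E1 : sdist (p, q, r) (c, -s, 0) = d x y1).
  { unfold sdist. rewrite Hdot. replace (p * c + q * - s + r * 0) with (cos a) by (fold XX; lra).
    apply Hacc; fold a b dl; split; lra. }
  assert (E2 : sdist (c, -s, 0) (c, s, 0) = d y1 y2).
  { unfold sdist. rewrite Hdot. replace (c * c + - s * s + 0 * 0) with (cos dl) by lra.
    apply Hacc; fold a b dl; split; lra. }
  assert (E3 : sdist (c, s, 0) (p, q, r) = d y2 x).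
  { unfold sdist. rewrite Hdot. replace (c * p + s * q + 0 * r) with (cos b) by (fold YY; lra).
    apply Hacc; fold a b dl; split; lra. }
  specialize (Hmain E1 E2 E3 x (c12 (dl / 2)) (p, q, r) (1, 0, 0)).
  assert (Hle : d x (c12 (dl / 2)) <= sdist (p, q, r) (1, 0, 0)).
  { apply Hmain.
    - left. exists 0. split; [fold a; lra|]. split; [destruct Gxy as [G1 _]; auto|].
      split; [exact HS1|]. split.
      + unfold sdist. rewrite Hdot. replace (p * p + q * q + r * r) with 1 by lra. apply acos_1.
      + rewrite E1. ring.
    - right; left. exists (dl / 2). split; [fold dl; lra|]. split; [reflexivity|].
      split; [exact HS4|]. split.
      + unfold sdist. rewrite Hdot. replace (c * 1 + - s * 0 + 0 * 0) with (cos (dl / 2)) by (fold c; ring).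
        apply Hacc; fold a b dl; split; lra.
      + unfold sdist. rewrite Hdot. replace (1 * c + 0 * s + 0 * 0) with (cos (dl / 2)) by (fold c; ring).
        rewrite Hacc by (split; lra). fold dl. field. }
  unfold sdist in Hle. rewrite Hdot in Hle.
  replace (p * 1 + q * 0 + r * 0) with p in Hle by ring.
  rewrite (Hsym x y2). fold a b XX YY c. fold p.
  rewrite <- (cos_acos p Hp1) at 1.
  apply cos_le_dec; [apply Hnn| exact Hle | apply acos_bound].
Qed.

Definition G {X : Type} (d : X -> X -> R) (xs : nat -> X) (y : X) (r : R) : Prop :=
  forall eps, 0 < eps -> exists N : nat, forall n, (N <= n)%nat -> r - eps <= cos (d (xs n) y).

Lemma G_mono {X} d xs (y : X) r r' : G d xs y r -> r' <= r -> G d xs y r'.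
Proof. intros H Hr e He. destruct (H e He) as [N HN]. exists N. intros n Hn. specialize (HN n Hn). lra. Qed.

Lemma G_le1 {X} d xs (y : X) r : G d xs y r -> r <= 1.
Proof.
  intros H. destruct (Rle_dec r 1) as [|Hn]; [auto|].
  destruct (H ((r - 1) / 2)) as [N HN]; [lra|]. specialize (HN N (le_n _)).
  pose proof (COS_bound (d (xs N) y)). lra.
Qed.

Lemma G_lb {X} d xs (y : X) c : (forall n, c <= cos (d (xs n) y)) -> G d xs y c.
Proof. intros H e He. exists 0%nat. intros n _. specialize (H n). lra. Qed.

Lemma G_closed {X} d xs (y : X) r : (forall eta, 0 < eta -> G d xs y (r - eta)) -> G d xs y r.
Proof.
  intros H e He. destruct (H (e/2) ltac:(lra) (e/2) ltac:(lra)) as [N HN].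
  exists N. intros n Hn. specialize (HN n Hn). lra.
Qed.

Lemma G_mid {X} d xs (y1 y2 m : X) k r1 r2 : 0 < k ->
  (forall x, (cos (d x y1) + cos (d x y2)) / (2 * k) <= cos (d x m)) ->
  G d xs y1 r1 -> G d xs y2 r2 -> G d xs m ((r1 + r2) / (2 * k)).
Proof.
  intros Hk Hm H1 H2 e He.
  destruct (H1 (e * k)) as [N1 HN1]; [nra|].
  destruct (H2 (e * k)) as [N2 HN2]; [nra|].
  exists (Nat.max N1 N2). intros n Hn.
  specialize (HN1 n ltac:(lia)). specialize (HN2 n ltac:(lia)).
  specialize (Hm (xs n)).
  apply Rle_trans with ((cos (d (xs n) y1) + cos (d (xs n) y2)) / (2 * k)); [|exact Hm].
  apply Rle_trans with ((r1 - e * k + (r2 - e * k)) / (2 * k)).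
  - right. field. lra.
  - unfold Rdiv. apply Rmult_le_compat_r; [apply Rlt_le, Rinv_0_lt_compat; lra| lra].
Qed.

Lemma G_lip {X} (d : X -> X -> R) xs (y z : X) r : is_metric d ->
  G d xs y r -> G d xs z (r - d y z).
Proof.
  intros [Hnn [_ [Hsym Htri]]] H e He. destruct (H e He) as [N HN]. exists N. intros n Hn.
  specialize (HN n Hn).
  pose proof (cos_lip (d (xs n) z) (d (xs n) y)).
  assert (Rabs (d (xs n) z - d (xs n) y) <= d y z).
  { apply Rabs_le. pose proof (Htri (xs n) y z). pose proof (Htri (xs n) z y).
    rewrite (Hsym z y) in *. lra. }
  pose proof (Rle_abs (cos (d (xs n) y) - cos (d (xs n) z))).
  rewrite Rabs_minus_sym in H0. lra.
Qed.

Lemma step_ineq (A B W1 W0 P s c : R) : c * c <= A -> 0 <= B <= 2 -> 0 < c ->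
  (A + B) * W1 >= A * P + B * W0 -> s <= P ->
  2 / (2 + c * c) * Rmin 0 (W0 - s) <= W1 - s.
Proof.
  intros HA HB Hc Hv HP.
  assert (Hpos : 0 < A + B) by nra.
  assert (Hm : (A + B) * (W1 - s) >= B * (W0 - s)) by nra.
  unfold Rmin. destruct (Rle_dec 0 (W0 - s)).
  - rewrite Rmult_0_r. nra.
  - assert (Hth : B <= (A + B) * (2 / (2 + c * c))).
    { apply Rmult_le_reg_r with (2 + c * c); [nra|].
      rewrite Rmult_assoc. unfold Rdiv. rewrite Rmult_assoc, Rinv_l by nra. nra. }
    assert (W0 - s < 0) by lra.
    assert ((A + B) * (2 / (2 + c * c) * (W0 - s)) <= (A + B) * (W1 - s)) by nra.
    apply Rmult_le_reg_l with (A + B); lra.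
Qed.

Lemma G_T {X} (d : X -> X -> R) xs (T : X -> X) z r c : is_metric d -> 0 < c ->
  (forall u v, c <= cos (d u v)) -> vicinal d T -> (forall n, xs (S n) = T (xs n)) ->
  G d xs z r -> G d xs (T z) r.
Proof.
  intros [Hnn [_ [Hsym Htri]]] Hc Hcos Hv Hxs H e He.
  pose proof (G_le1 _ _ _ _ H) as Hr1.
  destruct (H (e / 2)) as [N HN]; [lra|].
  set (s := r - e / 2).
  set (th := 2 / (2 + c * c)).
  assert (Hth0 : 0 < th) by (unfold th; apply Rdiv_lt_0_compat; nra).
  assert (Hth1 : th < 1) by (unfold th; apply Rmult_lt_reg_r with (2 + c * c); [nra|];
     unfold Rdiv; rewrite Rmult_assoc, Rinv_l by nra; nra).
  set (ee := fun n => cos (d (xs n) (T z)) - s).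
  assert (Hstep : forall n, (N <= n)%nat -> th * Rmin 0 (ee n) <= ee (S n)).
  { intros n Hn. unfold ee, th.
    pose proof (Hv (xs n) z) as V. cbv zeta in V. rewrite <- Hxs in V.
    rewrite (Hsym (T z) (xs n)) in V.
    set (Cx := cos (d (xs (S n)) (xs n))) in *. set (Cy := cos (d (T z) z)) in *.
    assert (c <= Cx <= 1) by (split; [apply Hcos|apply COS_bound]).
    assert (c <= Cy <= 1) by (split; [apply Hcos|apply COS_bound]).
    eapply step_ineq with (A := Cx ^ 2 * (1 + Cy ^ 2)) (B := Cy ^ 2 * (1 + Cx ^ 2))
       (P := cos (d (xs (S n)) z)); [ | | exact Hc | exact V | ].
    - assert (c * c <= Cx ^ 2) by nra. assert (0 <= Cy ^ 2) by nra. nra.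
    - assert (0 <= Cy ^ 2 <= 1) by (split; nra). assert (0 <= Cx ^ 2 <= 1) by (split; nra). split; nra.
    -
    unfold s. apply HN. lia. }
  assert (Hind : forall k, - th ^ k <= ee (N + k)%nat).
  { induction k.
    - simpl. rewrite Nat.add_0_r. unfold ee, s. pose proof (Hcos (xs N) (T z)). lra.
    - replace (N + S k)%nat with (S (N + k)) by lia.
      apply Rle_trans with (th * Rmin 0 (ee (N + k)%nat)); [|apply Hstep; lia].
      simpl. replace (- (th * th ^ k)) with (th * (- th ^ k)) by ring.
      apply Rmult_le_compat_l; [lra|]. apply Rmin_glb; [pose proof (pow_le th k); lra| exact IHk]. }
  destruct (pow_lt_1_zero th ltac:(rewrite Rabs_pos_eq; lra) (e / 2)) as [K HK]; [lra|].
  exists (N + K)%nat. intros n Hn.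
  replace n with (N + (n - N))%nat by lia.
  specialize (Hind (n - N)%nat). specialize (HK (n - N)%nat ltac:(lia)).
  rewrite Rabs_pos_eq in HK by (apply pow_le; lra).
  unfold ee, s in Hind. lra.
Qed.

Theorem corollary4p3 (X : Type) (d : X -> X -> R) (x0 : X) :
  CAT1 d -> complete d -> diam_lt d (PI / 2) ->
  forall T : X -> X, vicinal d T -> exists x : X, T x = x.
Proof.
  intros Hcat Hcomp [D [HD Hd]] T Hv.
  pose proof Hcat as [Hm _]. pose proof Hm as [Hnn [H0 [Hsym Htri]]].
  pose proof PI_RGT_0 as Hpi. pose proof PI2_1 as Hpi1.
  assert (HD0 : 0 <= D) by (apply Rle_trans with (d x0 x0); [apply Hnn|apply Hd]).
  set (c := cos D).
  assert (Hc : 0 < c) by (apply cos_gt_0; lra).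
  assert (Hcos : forall u v, c <= cos (d u v)).
  { intros. apply cos_le_dec; [apply Hnn|apply Hd|lra]. }
  pose proof (midpoint X d D Hcat HD0 HD Hd) as Hmid.
  set (xs := fun n => Nat.iter n T x0).
  assert (Hxs : forall n, xs (S n) = T (xs n)) by reflexivity.
  set (E := fun r => exists y, G d xs y r).
  assert (HEb : bound E) by (exists 1; intros r [y Hy]; exact (G_le1 _ _ _ _ Hy)).
  assert (HEc : E c) by (exists x0; apply G_lb; intros; apply Hcos).
  destruct (completeness E HEb (ex_intro _ c HEc)) as [M [HMub HMlub]].
  assert (HcM : c <= M) by (apply HMub; exact HEc).
  assert (HM1 : M <= 1) by (apply HMlub; intros r [y Hy]; exact (G_le1 _ _ _ _ Hy)).
  assert (Key : forall y1 y2 r1 r2, G d xs y1 r1 -> G d xs y2 r2 ->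
             (r1 + r2) / 2 <= M * cos (d y1 y2 / 2)).
  { intros y1 y2 r1 r2 G1 G2. destruct (Hmid y1 y2) as [m Hm'].
    assert (Hk : 0 < cos (d y1 y2 / 2)).
    { apply cos_gt_0; pose proof (Hnn y1 y2); pose proof (Hd y1 y2); lra. }
    pose proof (G_mid d xs y1 y2 m _ r1 r2 Hk Hm' G1 G2) as Gm.
    assert (HE : (r1 + r2) / (2 * cos (d y1 y2 / 2)) <= M) by (apply HMub; exists m; exact Gm).
    apply Rmult_le_reg_r with (/ cos (d y1 y2 / 2)); [apply Rinv_0_lt_compat; lra|].
    rewrite Rmult_assoc, Rinv_r, Rmult_1_r by lra.
    replace ((r1 + r2) / 2 * / cos (d y1 y2 / 2)) with ((r1 + r2) / (2 * cos (d y1 y2 / 2)))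
      by (field; lra). exact HE. }
  assert (Happ : forall eps, 0 < eps -> exists y, G d xs y (M - eps)).
  { intros eps He. apply NNPP. intros Hno.
    assert (M <= M - eps); [|lra].
    apply HMlub. intros r [y Hy]. destruct (Rle_dec r (M - eps)) as [|Hgt]; [auto|].
    exfalso. apply Hno. exists y. apply G_mono with r; [exact Hy|lra]. }
  assert (Hys : forall k : nat, exists y, G d xs y (M - / (INR k + 1))).
  { intros k. apply Happ. apply Rinv_0_lt_compat. pose proof (pos_INR k). lra. }
  set (ys := fun k => proj1_sig (constructive_indefinite_description _ (Hys k))).
  assert (Gys : forall k, G d xs (ys k) (M - / (INR k + 1))).
  { intros k. unfold ys. destruct (constructive_indefinite_description _ (Hys k)). auto. }
  assert (Hinv : forall K k, (K <= k)%nat -> / (INR k + 1) <= / (INR K + 1)).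
  { intros K k HK. apply Rinv_le_contravar; [pose proof (pos_INR K); lra|].
    apply le_INR in HK. lra. }
  assert (Hsmall : forall e, 0 < e -> exists K : nat, / (INR K + 1) < e).
  { intros e He. destruct (archimed_cor1 e He) as [K [HK HK0]]. exists K.
    apply Rle_lt_trans with (/ INR K); [|exact HK].
    apply Rinv_le_contravar; [apply lt_0_INR; lia| lra]. }
  assert (Hcauchy : forall eps, 0 < eps -> exists N : nat, forall m n, (N <= m)%nat -> (N <= n)%nat ->
        d (ys m) (ys n) < eps).
  { intros eps He.
    set (r0 := Rmin eps 1).
    assert (Hr0 : 0 < r0 <= 1) by (unfold r0; unfold Rmin; destruct (Rle_dec eps 1); lra).
    assert (Heta : cos (r0 / 2) < 1).
    { assert (cos (r0 / 2) < cos 0) by (apply cos_decreasing_1; lra). rewrite cos_0 in H. exact H. }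
    destruct (Hsmall (M * (1 - cos (r0 / 2)))) as [K HK]; [apply Rmult_lt_0_compat; lra|].
    exists K. intros m n Hm1 Hn1.
    pose proof (G_mono _ _ _ _ (M - / (INR K + 1)) (Gys m) ltac:(pose proof (Hinv K m Hm1); lra)) as G1.
    pose proof (G_mono _ _ _ _ (M - / (INR K + 1)) (Gys n) ltac:(pose proof (Hinv K n Hn1); lra)) as G2.
    pose proof (Key _ _ _ _ G1 G2) as Kk.
    assert (Hcc : cos (r0 / 2) < cos (d (ys m) (ys n) / 2)) by nra.
    apply cos_decreasing_0 in Hcc.
    - unfold r0 in Hcc. pose proof (Rmin_l eps 1). lra.
    - lra.
    - lra.
    - pose proof (Hnn (ys m) (ys n)); lra.
    - pose proof (Hd (ys m) (ys n)); lra. }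
  destruct (Hcomp ys Hcauchy) as [z Hz].
  assert (Gz : G d xs z M).
  { apply G_closed. intros eta Heta.
    destruct (Hz (eta / 2)) as [N HN]; [lra|].
    destruct (Hsmall (eta / 2)) as [K HK]; [lra|].
    set (k := Nat.max N K).
    pose proof (G_lip d xs (ys k) z _ Hm (Gys k)) as Gk.
    apply G_mono with (1 := Gk).
    pose proof (HN k ltac:(unfold k; lia)). pose proof (Hinv K k ltac:(unfold k; lia)). lra. }
  pose proof (G_T d xs T z M c Hm Hc Hcos Hv Hxs Gz) as GTz.
  exists z. apply NNPP. intros Hne.
  assert (Hpos : 0 < d (T z) z).
  { destruct (Hnn (T z) z) as [|Heq]; [auto|]. exfalso. apply Hne. apply H0. auto. }
  pose proof (Key _ _ _ _ GTz Gz) as Kk.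
  assert (cos (d (T z) z / 2) < 1).
  { rewrite <- cos_0. apply cos_decreasing_1; pose proof (Hd (T z) z); lra. }
  nra.
Qed.
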